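(* Let $L,d\geq 1$ and let $G$ be an $(L,d)$-almost-biregular graph. Then $G$ has a non-empty subgraph $G'$ with average degree at least $d/2$ and maximum degree at most $4Ld$.
   Context: A bipartite graph $G$ is $(L,d)$-almost-biregular if it has parts $A$ and $B$ (with $A$ non-empty) such that $d_G(v)=d$ for every $v\in B$, and, writing $D=e(G)/|A|$, we have $D\geq d$ (equivalently $|A|\leq|B|$) and $d_G(u)\leq LD$ for every $u\in A$. Average degree is $2e/|V|$. *)

(* Defs.v *)
From mathcomp Require Import all_boot all_order all_algebra.
Set Implicit Arguments. Unset Strict Implicit. Unset Printing Implicit Defensive.
Import Order.TTheory GRing.Theory Num.Theory.
Local Open Scope ring_scope.

Section Graphs.
Variable V : finType.

Definition simple_graph (e : rel V) : Prop := symmetric e /\ irreflexive e.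

Definition deg (e : rel V) (v : V) : nat := #|[set u | e v u]|.

Definition edges (e : rel V) : {set {set V}} :=
  [set E : {set V} | [exists u, exists v, e u v && (E == [set u; v])]].

Definition bipartition (e : rel V) (A B : {set V}) : Prop :=
  [disjoint A & B] /\ A :|: B = setT /\
  (forall u v, e u v -> ((u \in A) && (v \in B)) || ((u \in B) && (v \in A))).

Definition Dval (R : realFieldType) (e : rel V) (A : {set V}) : R :=
  (#|edges e|)%:R / (#|A|)%:R.

Definition almost_biregular (R : realFieldType) (L : R) (d : nat)
    (e : rel V) (A B : {set V}) : Prop :=
  bipartition e A B /\ A != set0 /\
  (forall v, v \in B -> deg e v = d) /\
  (d%:R <= Dval R e A) /\
  (forall u, u \in A -> (deg e u)%:R <= L * Dval R e A).

Definition subgraph (e : rel V) (S : {set V}) (e' : rel V) : Prop :=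
  symmetric e' /\ (forall u v, e' u v -> [&& e u v, u \in S & v \in S]).

Definition avg_deg (R : realFieldType) (S : {set V}) (e' : rel V) : R :=
  2 * (#|edges e'|)%:R / (#|S|)%:R.

End Graphs.

(* Main.v *)
Require Import Defs.
From mathcomp Require Import all_boot all_order all_algebra.
From mathcomp Require Import zify ring lra.
Import Order.TTheory GRing.Theory Num.Theory.

Lemma card_pairs (V : finType) (X : {set V}) (F : V -> {set V}) :
  #|[set p : V * V | (p.1 \in X) && (p.2 \in F p.1)]| = \sum_(u in X) #|F u|.
Proof.
rewrite -sum1dep_card -(pair_big_dep (fun u => u \in X) (fun u v => v \in F u) (fun _ _ => 1)) /=.
by apply: eq_bigr => u _; rewrite sum1_card.
Qed.

Section Main.
Variables (V : finType) (d : nat) (e : rel V) (A B : {set V}).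
Hypothesis esym : symmetric e.
Hypothesis hdis : [disjoint A & B].
Hypothesis hbip : forall {u v}, e u v -> ((u \in A) && (v \in B)) || ((u \in B) && (v \in A)).
Hypothesis hdeg : forall v, v \in B -> deg e v = d.

Definition Nb u := [set v | e u v].
Definition dX (X : {set V}) u := #|Nb u :&: X|.
Definition EX c X := \sum_(u in A) minn (dX X u) c.
Definition T c X u := [set y in take c (enum (Nb u :&: X))].
Definition e' c X : rel V := fun x y =>
  ((x \in A) && (y \in T c X x)) || ((y \in A) && (x \in T c X y)).

Lemma AnB {x} : x \in A -> x \in B -> False.
Proof. by move=> xA; rewrite (disjointFr hdis xA). Qed.

Lemma nbrA {u v} : u \in B -> e u v -> v \in A.
Proof.
move=> uB /hbip /orP [/andP [uA _]|/andP [_ //]]; by case: (AnB uA uB).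
Qed.

Lemma nbrB {u v} : u \in A -> e u v -> v \in B.
Proof.
move=> uA /hbip /orP [/andP [_ //]|/andP [uB _]]; by case: (AnB uA uB).
Qed.

Lemma edges_le : #|edges e| <= #|B| * d.
Proof.
set P := [set p : V * V | (p.1 \in B) && (p.2 \in Nb p.1)].
have cP : #|P| = #|B| * d.
  rewrite card_pairs -sum_nat_const; apply: eq_bigr => u uB.
  by rewrite -(hdeg _ uB).
rewrite -cP; apply: leq_trans (leq_imset_card (fun p : V * V => [set p.1; p.2]) P).
apply: subset_leq_card; apply/subsetP => E; rewrite inE.
case/existsP => u /existsP [v /andP [euv /eqP ->]].
case/orP: (hbip euv) => /andP [h1 h2].
- apply/imsetP; exists (v, u); last by rewrite /= setUC.
  by rewrite inE /= h2 /Nb inE esym.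
- apply/imsetP; exists (u, v) => //.
  by rewrite inE /= h1 /Nb inE.
Qed.

Lemma T_sub c (X : {set V}) u : T c X u \subset Nb u :&: X.
Proof. by apply/subsetP => y; rewrite inE => /mem_take; rewrite mem_enum. Qed.

Lemma card_T c (X : {set V}) u : #|T c X u| = minn (dX X u) c.
Proof.
rewrite cardsE; move/card_uniqP: (take_uniq c (enum_uniq (mem (Nb u :&: X)))) => ->.
by rewrite size_take_min -cardE minnC.
Qed.

Lemma edges_ge c (X : {set V}) : X \subset B -> EX c X <= #|edges (e' c X)|.
Proof.
move=> XB.
set P := [set p : V * V | (p.1 \in A) && (p.2 \in T c X p.1)].
have cP : #|P| = EX c X.
  by rewrite card_pairs; apply: eq_bigr => u _; rewrite card_T.
have PB p : p \in P -> (p.1 \in A) && (p.2 \in B) && e p.1 p.2.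
  rewrite inE => /andP [-> /(subsetP (T_sub c X p.1))].
  rewrite inE /Nb inE => /andP [-> /(subsetP XB) ->]; by [].
rewrite -cP -(card_in_imset (f := fun p : V * V => [set p.1; p.2])).
  apply: subset_leq_card; apply/subsetP => E /imsetP [p pP ->].
  rewrite inE; apply/existsP; exists p.1; apply/existsP; exists p.2.
  rewrite eqxx andbT /e'; move: pP; rewrite inE => /andP [-> ->] //.
move=> [p1 p2] [q1 q2] /PB /= /andP [/andP [p1A p2B] _] /PB /= /andP [/andP [q1A q2B] _] /= E.
have h1 : p1 \in [set q1; q2] by rewrite -E !inE eqxx.
have h2 : p2 \in [set q1; q2] by rewrite -E !inE eqxx orbT.
move: h1 h2; rewrite !inE => /orP [/eqP e1 | /eqP e1]; last by move: p1A; rewrite e1 => /AnB /(_ q2B).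
move=> /orP [/eqP e2 | /eqP e2]; first by move: q1A; rewrite -e2 => /AnB /(_ p2B).
by rewrite e1 e2.
Qed.


Lemma sum_e (Y : {set V}) u : \sum_(v in Y) (e u v : nat) = #|[set v in Y | e u v]|.
Proof.
rewrite -sum1dep_card -big_mkcondr /=.
by rewrite big_mkcond [RHS]big_mkcond; apply: eq_bigr => v _; case: (v \in Y); case: (e u v).
Qed.

Lemma sum_nbr v : v \in B -> \sum_(u in A) (e u v : nat) = d.
Proof.
move=> vB; rewrite -(hdeg _ vB) /deg.
rewrite (eq_bigr (fun u => (e v u : nat))); last by move=> u _; rewrite esym.
rewrite sum_e; apply: eq_card => u; rewrite !inE.
by case h: (e v u); rewrite ?andbF // (nbrA vB h).
Qed.

Lemma dX_add (X : {set V}) v u : v \notin X -> dX (v |: X) u = dX X u + e u v.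
Proof.
move=> vX; rewrite /dX; case h: (e u v).
- have -> : Nb u :&: (v |: X) = v |: (Nb u :&: X).
    by apply/setP => y; rewrite !inE; case: eqP => [->|]; rewrite ?h.
  by rewrite cardsU1 inE (negbTE vX) andbF /= addnC.
- have -> : Nb u :&: (v |: X) = Nb u :&: X.
    by apply/setP => y; rewrite !inE; case: eqP => [->|]; rewrite ?h ?andbF.
  by rewrite addn0.
Qed.

Lemma EX_add c (X : {set V}) v : v \notin X ->
  EX c (v |: X) = EX c X + \sum_(u in A) (e u v && (dX X u < c)).
Proof.
move=> vX; rewrite /EX -big_split; apply: eq_bigr => u _; rewrite dX_add //.
case: (e u v); case: (ltnP (dX X u) c) => h; simpl; lia.
Qed.

Lemma EX0 c : EX c set0 = 0.
Proof. by rewrite /EX big1 // => u _; rewrite /dX setI0 cards0 min0n. Qed.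


Lemma inT c (X : {set V}) u y : y \in T c X u -> e u y && (y \in X).
Proof. by move/(subsetP (T_sub c X u)); rewrite !inE. Qed.

Lemma e'_sub c (X : {set V}) x y : e' c X x y -> [&& e x y, x \in A :|: X & y \in A :|: X].
Proof.
case/orP => /andP [h /inT /andP [h1 h2]]; rewrite !inE ?h ?h1 ?h2 ?orbT //.
by rewrite esym h1.
Qed.

Lemma deg_e'_A c (X : {set V}) x : x \in A -> X \subset B -> deg (e' c X) x <= c.
Proof.
move=> xA XB; rewrite /deg; apply: leq_trans (_ : #|T c X x| <= c); last first.
  by rewrite card_T geq_minr.
apply: subset_leq_card; apply/subsetP => y; rewrite inE /e' xA /=.
case/orP => // /andP [_ /inT /andP [_ /(subsetP XB) xB]]; by case: (AnB xA xB).
Qed.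

Lemma deg_e'_B c (X : {set V}) x : x \in B -> deg (e' c X) x <= d.
Proof.
move=> xB; rewrite -(hdeg _ xB) /deg; apply: subset_leq_card; apply/subsetP => y.
by rewrite !inE => /e'_sub /andP [].
Qed.

End Main.

Local Open Scope ring_scope.

Theorem lemma3p7 (R : realFieldType) (V : finType) (L : R) (d : nat)
    (e : rel V) (A B : {set V}) :
  1 <= L -> (1 <= d)%N -> simple_graph e ->
  almost_biregular L d e A B ->
  exists (S : {set V}) (e' : rel V),
    [/\ subgraph e S e', S != set0,
        (d%:R / 2 <= avg_deg R S e') &
        (forall v, v \in S -> (deg e' v)%:R <= 4 * L * d%:R)].
Proof.
move=> L1 d1 [esym _] [[hdis [_ hbip]] [A0 [hdeg [hdD hLD]]]].
set a := #|A|; set b := #|B|; set N := #|edges e|.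
have a0 : (0 < a)%N by rewrite card_gt0.
have a0R : 0 < a%:R :> R by rewrite ltr0n.
have hN : (N <= b * d)%N := @edges_le V d e A B esym hbip hdeg.
have ab : (a <= b)%N.
  move: hdD; rewrite /Dval ler_pdivlMr // -natrM ler_nat => h.
  have : (d * a <= d * b)%N by apply: leq_trans h (leq_trans hN _); rewrite mulnC.
  by rewrite leq_pmul2l.
have L0 : 0 <= L by apply: le_trans L1; rewrite ler01.
pose Lc := 4 * L * d%:R.
have Lc0 : 0 <= Lc by rewrite /Lc !mulr_ge0 ?ler0n.
have [c [hcL hcb hcmax]] : exists c : nat, [/\ c%:R <= Lc, (c <= b)%N &
    forall k, (k <= b)%N -> k%:R <= Lc -> (k <= c)%N].
  have [|k hk kmax] := @arg_maxnP _ (ord0 : 'I_b.+1) (fun k : 'I_b.+1 => (k : nat)%:R <= Lc) val.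
    by rewrite /= Lc0.
  exists k; split => //; first by rewrite -ltnS ltn_ord.
  by move=> k' k'b hk'; apply: (kmax (Ordinal (k'b : (k' < b.+1)%N))).
pose Phi := fun Y : {set V} => (4 * EX V e A c Y + 3 * d * (b - #|Y|))%N.
have [X XB Xmax] := @arg_maxnP _ set0 (fun Y : {set V} => Y \subset B) Phi (sub0set B).
set m := #|X|; set E := EX V e A c X.
have mb : (m <= b)%N := subset_leq_card XB.
have F1 : (3 * d * m <= 4 * E)%N.
  have := Xmax set0 (sub0set B); rewrite /Phi EX0 cards0 subn0 -/m -/E => h.
  nia.
have key : (d * (a + m) <= 4 * E)%N.
  rewrite leqNgt; apply/negP => hlt.
  have m2a : (2 * m < a)%N by nia.
  have F2 : forall v, v \in B :\: X ->
      (d <= 4 * \sum_(u in A) (e u v && ~~ (dX V e X u < c)))%N.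
    move=> v; rewrite inE => /andP [vX vB].
    have vXB : v |: X \subset B by rewrite subUset sub1set vB XB.
    have := Xmax _ vXB; rewrite /Phi (@EX_add V e A B hdis c X v vX) cardsU1 vX /= -/m -/E => h.
    have hb : (1 + m <= b)%N by have := subset_leq_card vXB; rewrite cardsU1 vX.
    have hs : (\sum_(u in A) (e u v && (dX V e X u < c)) +
               \sum_(u in A) (e u v && ~~ (dX V e X u < c)))%N = d.
      rewrite -big_split -(@sum_nbr V d e A B esym hdis hbip hdeg v vB) /=.
      by apply: eq_bigr => u _; case: (e u v); case: (dX V e X u < c)%N.
    nia.
  have cBX : #|B :\: X| = (b - m)%N by rewrite cardsD (setIidPr XB).
  pose Sd := (\sum_(u in A) (~~ (dX V e X u < c)%N) * deg e u)%N.
  have SumF : (d * (b - m) <= 4 * Sd)%N.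
    apply: (@leq_trans (4 * \sum_(v in B :\: X) \sum_(u in A) (e u v && ~~ (dX V e X u < c)%N))%N).
      rewrite -cBX mulnC -sum_nat_const big_distrr /=; apply: leq_sum => v hv; exact: F2.
    rewrite leq_pmul2l // exchange_big /Sd /=; apply: leq_sum => u uA.
    rewrite (eq_bigr (fun v => (~~ (dX V e X u < c)%N) * e u v)%N); last first.
      by move=> v _; case: (e u v); case: (dX V e X u < c)%N.
    rewrite -big_distrr /= leq_mul2l; apply/orP; right.
    rewrite (@sum_e V e) /deg; apply: subset_leq_card; apply/subsetP => v; rewrite !inE.
    by case/andP.
  have hLd : 1 <= L * d%:R.
    have : 1 <= d%:R :> R by rewrite ler1n.
    move=> h1; nra.
  have per : forall u, u \in A ->
      (3 * a * ((~~ (dX V e X u < c)%N) * deg e u) <= b * minn (dX V e X u) c)%N.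
    move=> u uA; case hp: (dX V e X u < c)%N; first by rewrite /= mul0n muln0.
    have cu : (c <= dX V e X u)%N by rewrite leqNgt hp.
    have dm : (dX V e X u <= m)%N by apply: subset_leq_card; apply: subsetIr.
    have cb : (c.+1 <= b)%N by lia.
    have hc1 : Lc < (c.+1)%:R.
      rewrite ltNge; apply/negP => h; have := hcmax _ cb h; by rewrite ltnn.
    rewrite (minn_idPr cu) /= mul1n -(ler_nat R) !natrM.
    have hu := hLD u uA; rewrite /Dval mulrA ler_pdivlMr // in hu.
    have h2 : N%:R <= b%:R * d%:R :> R by rewrite -natrM ler_nat.
    have h3 : L * N%:R <= L * (b%:R * d%:R) by rewrite ler_wpM2l.
    have h4 : 3 * L * d%:R <= c%:R.
      move: hc1; rewrite /Lc -addn1 natrD => hc1; lra.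
    have h5 : b%:R * (3 * L * d%:R) <= b%:R * c%:R by rewrite ler_wpM2l ?ler0n.
    nra.
  have hS : (3 * a * Sd <= b * E)%N.
    rewrite /Sd /E /EX !big_distrr /=; apply: leq_sum => u uA; exact: per.
  have s1 : (3 * a * (d * (b - m)) <= 4 * (b * E))%N.
    apply: (@leq_trans (3 * a * (4 * Sd))%N); first by rewrite leq_mul2l SumF orbT.
    nia.
  have b0 : (0 < b)%N by lia.
  have s2 : (4 * (b * E) < b * (d * (a + m)))%N.
    by rewrite mulnCA ltn_pmul2l.
  have s3 : (3 * a * (b - m) * d < b * (a + m) * d)%N.
    have := leq_ltn_trans s1 s2; rewrite !mulnA (mulnC b d) -!mulnA; nia.
  rewrite ltn_pmul2r // in s3.
  have hk := subnK mb.
  move: s3 ab mb m2a hk a0; clear; move: (b - m)%N => k.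
  nia.
exists (A :|: X), (e' V e A c X); split.
- split; first by move=> x y; rewrite /e' orbC.
  by move=> u v; apply: (@e'_sub V e A esym c X u v).
- by case/set0Pn: A0 => x xA; apply/set0Pn; exists x; rewrite inE xA.
- rewrite /avg_deg.
  have hE := @edges_ge V e A B hdis c X XB; rewrite -/E in hE.
  have hs : (#|A :|: X| <= a + m)%N by rewrite cardsU leq_subr.
  have s0 : (0 < #|A :|: X|)%N.
    by case/set0Pn: A0 => x xA; apply/card_gt0P; exists x; rewrite inE xA.
  have hh : (d * #|A :|: X| <= 4 * #|edges (e' V e A c X)|)%N.
    apply: leq_trans (leq_mul (leqnn d) hs) _; apply: leq_trans key _.
    by rewrite leq_pmul2l.
  rewrite ler_pdivlMr ?ltr0n //.
  move: hh; rewrite -(ler_nat R) !natrM => hh.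
  lra.
- move=> v; rewrite inE => /orP [vA | vX].
  + have := @deg_e'_A V e A B hdis c X v vA XB; rewrite -(ler_nat R) => h.
    by apply: le_trans h hcL.
  + have := @deg_e'_B V d e A B esym hdeg c X v (subsetP XB v vX); rewrite -(ler_nat R) => h.
    apply: le_trans h _; have : 0 <= d%:R :> R by rewrite ler0n.
    move=> h0; nra.
Qed.
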